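(* Consider a shallow ReLU network without biases with widths $n_0,n_1,n_2$ and two activation patterns $A_1,A_2\in\{0,1\}^{n_1}$. Let $r_i=\sum_j A_{ij}$, $s=\sum_jA_{1j}A_{2j}$ and $t=r_1+r_2-2s$. Then the ideal $J^{\mathbf{A}}$ contains: (1) all $(r_1+1)$-minors of $M_1$; (2) all $(r_2+1)$-minors of $M_2$; (3) all $(n_1+1)$-minors of $[M_1\mid M_2]$ and of $[M_1^\top\mid M_2^\top]$; (4) all $(t+1)$-minors of $M_1-M_2$.
   Context: Parameters are $W^{(1)}\in\mathbb{R}^{n_1\times n_0}$, $W^{(2)}\in\mathbb{R}^{n_2\times n_1}$, and $M_{A}(\theta)=W^{(2)}\operatorname{diag}(A)W^{(1)}$. $J^{\mathbf{A}}\subseteq\mathbb{C}[m^{(1)}_{ij},m^{(2)}_{ij}]$ is the ideal of all polynomials vanishing on the Zariski closure in $\mathbb{C}^{n_2\times n_0}\times\mathbb{C}^{n_2\times n_0}$ of $\{(M_{A_1}(\theta),M_{A_2}(\theta)):\theta\}$, where $M_1=(m^{(1)}_{ij})$ and $M_2=(m^{(2)}_{ij})$ are the matrices of coordinates. $[M_1\mid M_2]$ denotes horizontal concatenation. *)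

(* Defs.v *)
From HB Require Import structures.
From mathcomp Require Import all_boot all_order all_algebra.
From mathcomp Require Import Rstruct.
From mathcomp Require Import complex.
From mathcomp Require Import mpoly.

Set Implicit Arguments.
Unset Strict Implicit.
Unset Printing Implicit Defensive.

Import Order.TTheory GRing.Theory Num.Theory.
Local Open Scope ring_scope.

Definition CC : Type := (Rdefinitions.R)[i].

Definition nvars (n2 n0 : nat) : nat := (n2 * n0 + n2 * n0)%N.

Definition PR (n2 n0 : nat) := {mpoly CC[nvars n2 n0]}.

Definition Mvar1 (n2 n0 : nat) : 'M[PR n2 n0]_(n2, n0) :=
  \matrix_(i, j) 'X_(lshift (n2 * n0) (mxvec_index i j)).
Definition Mvar2 (n2 n0 : nat) : 'M[PR n2 n0]_(n2, n0) :=
  \matrix_(i, j) 'X_(rshift (n2 * n0) (mxvec_index i j)).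

(* A point (X1, X2) of C^{n2 x n0} x C^{n2 x n0} as an assignment of the
   coordinates: m^(1)_ij |-> X1 i j, m^(2)_ij |-> X2 i j. *)
Definition pt (n2 n0 : nat) (X1 X2 : 'M[CC]_(n2, n0)) : 'I_(nvars n2 n0) -> CC :=
  fun k => match split k with
           | inl a => mxvec X1 0 a
           | inr b => mxvec X2 0 b
           end.

Definition diagA (n1 : nat) (A : 'I_n1 -> bool) : 'M[Rdefinitions.R]_n1 :=
  diag_mx (\row_j (A j)%:R).

Definition MA (n0 n1 n2 : nat) (A : 'I_n1 -> bool)
  (W1 : 'M[Rdefinitions.R]_(n1, n0)) (W2 : 'M[Rdefinitions.R]_(n2, n1))
  : 'M[CC]_(n2, n0) :=
  map_mx (fun x : Rdefinitions.R => (x%:C)%C) (W2 *m diagA A *m W1).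

Definition param_image (n0 n1 n2 : nat) (A1 A2 : 'I_n1 -> bool)
  (X1 X2 : 'M[CC]_(n2, n0)) : Prop :=
  exists (W1 : 'M[Rdefinitions.R]_(n1, n0)) (W2 : 'M[Rdefinitions.R]_(n2, n1)),
    X1 = MA A1 W1 W2 /\ X2 = MA A2 W1 W2.

Definition zariski_closure (n2 n0 : nat)
  (S : 'M[CC]_(n2, n0) -> 'M[CC]_(n2, n0) -> Prop)
  (X1 X2 : 'M[CC]_(n2, n0)) : Prop :=
  forall p : PR n2 n0,
    (forall Y1 Y2, S Y1 Y2 -> p.@[pt Y1 Y2] = 0) -> p.@[pt X1 X2] = 0.

Definition JA (n0 n1 n2 : nat) (A1 A2 : 'I_n1 -> bool) (p : PR n2 n0) : Prop :=
  forall X1 X2, @zariski_closure n2 n0 (@param_image n0 n1 n2 A1 A2) X1 X2 -> p.@[pt X1 X2] = 0.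

Definition is_minor (T : comNzRingType) (k p q : nat) (M : 'M[T]_(p, q)) (d : T)
  : Prop :=
  exists (f : 'I_k -> 'I_p) (g : 'I_k -> 'I_q),
    {homo f : x y / (x < y)%N} /\ {homo g : x y / (x < y)%N} /\
    d = \det (mxsub f g M).

Definition nactive (n1 : nat) (A : 'I_n1 -> bool) : nat := (\sum_(j < n1) A j)%N.
Definition ncommon (n1 : nat) (A1 A2 : 'I_n1 -> bool) : nat :=
  (\sum_(j < n1) (A1 j && A2 j))%N.

(* Main.v *)
Require Import Defs.
From HB Require Import structures.
From mathcomp Require Import all_boot all_order all_algebra.
From mathcomp Require Import Rstruct.
From mathcomp Require Import complex.
From mathcomp Require Import mpoly.
Import Order.TTheory GRing.Theory Num.Theory.
Local Open Scope ring_scope.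

Lemma rank_mxsub (F : fieldType) k p q (M : 'M[F]_(p,q)) (f : 'I_k -> 'I_p) (g : 'I_k -> 'I_q) :
  (\rank (mxsub f g M) <= \rank M)%N.
Proof.
rewrite mxsubrc rowsubE; apply: leq_trans (mxrankM_maxr _ _) _.
rewrite -mxrank_tr.
have -> : (colsub g M)^T = rowsub g M^T by rewrite trmx_mxsub.
rewrite rowsubE; apply: leq_trans (mxrankM_maxr _ _) _.
by rewrite mxrank_tr.
Qed.

Lemma minor_rank (F : fieldType) k p q (M : 'M[F]_(p,q)) (f : 'I_k -> 'I_p) (g : 'I_k -> 'I_q) :
  (\rank M < k)%N -> \det (mxsub f g M) = 0.
Proof.
move=> Hr; apply/eqP; apply: contraTT Hr => nz; rewrite -leqNgt.
have : mxsub f g M \in unitmx by rewrite unitmxE unitfE.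
move/mxrank_unit => {1}<-; exact: rank_mxsub.
Qed.

Lemma rank_diag (F : fieldType) n (d : 'rV[F]_n) :
  (\rank (diag_mx d) <= \sum_j ((d 0 j != 0)%R : nat))%N.
Proof.
rewrite diag_mx_sum_delta.
apply: (big_ind2 (fun (x : 'M[F]_n) (y : nat) => \rank x <= y)%N).
- by rewrite mxrank0.
- move=> x1 x2 y1 y2 H1 H2; apply: leq_trans (mxrank_add _ _) _; exact: leq_add.
- move=> i _; case: eqP => [->|/eqP nz]; first by rewrite scale0r mxrank0.
  by rewrite mxrank_scale_nz // mxrank_delta.
Qed.

Section Main.
Variables (n0 n1 n2 : nat) (A1 A2 : 'I_n1 -> bool).

Lemma J_of (P : PR n2 n0) :
  (forall W1 W2, P.@[pt (MA A1 W1 W2) (MA A2 W1 W2)] = 0) -> JA A1 A2 P.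
Proof. by move=> H X1 X2 Hz; apply: Hz => Y1 Y2 [W1 [W2 [-> ->]]]; exact: H. Qed.

Lemma eval_det k a b (P : 'M[PR n2 n0]_(a,b)) (f : 'I_k -> 'I_a) (g : 'I_k -> 'I_b) v :
  (\det (mxsub f g P)).@[v] = \det (mxsub f g (map_mx (meval v) P)).
Proof. by rewrite -map_mxsub det_map_mx. Qed.

Lemma map_M1 (X1 X2 : 'M[CC]_(n2, n0)) : map_mx (meval (pt X1 X2)) (Mvar1 n2 n0) = X1.
Proof.
apply/matrixP => i j; rewrite !mxE mevalXU /pt.
by rewrite (unsplitK (inl _ : 'I__ + 'I__)) mxvecE.
Qed.

Lemma map_M2 (X1 X2 : 'M[CC]_(n2, n0)) : map_mx (meval (pt X1 X2)) (Mvar2 n2 n0) = X2.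
Proof.
apply/matrixP => i j; rewrite !mxE mevalXU /pt.
by rewrite (unsplitK (inr _ : 'I__ + 'I__)) mxvecE.
Qed.

Definition emb := fun x : Rdefinitions.R => (x%:C)%C.

Lemma rank_MA (A : 'I_n1 -> bool) (W1 : 'M[Rdefinitions.R]_(n1, n0)) (W2 : 'M[Rdefinitions.R]_(n2, n1)) : (\rank (MA A W1 W2) <= nactive A)%N.
Proof.
rewrite /MA mxrank_map; apply: leq_trans (mxrankM_maxl _ _) _.
apply: leq_trans (mxrankM_maxr _ _) _.
rewrite /diagA; apply: leq_trans (rank_diag _ _ _) _.
rewrite /nactive; apply: leq_sum => j _; rewrite mxE.
by case: (A j); rewrite ?eqxx ?oner_eq0.
Qed.

Lemma rank_row (W1 : 'M[Rdefinitions.R]_(n1, n0)) (W2 : 'M[Rdefinitions.R]_(n2, n1)) : (\rank (row_mx (MA A1 W1 W2) (MA A2 W1 W2)) <= n1)%N.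
Proof.
rewrite /MA -map_row_mx mxrank_map -!mulmxA -mul_mx_row.
apply: leq_trans (mxrankM_maxl _ _) _; exact: rank_leq_col.
Qed.

Lemma rank_rowT (W1 : 'M[Rdefinitions.R]_(n1, n0)) (W2 : 'M[Rdefinitions.R]_(n2, n1)) : (\rank (row_mx (MA A1 W1 W2)^T (MA A2 W1 W2)^T) <= n1)%N.
Proof.
rewrite /MA !map_trmx -map_row_mx mxrank_map !trmx_mul -mul_mx_row.
apply: leq_trans (mxrankM_maxl _ _) _; exact: rank_leq_col.
Qed.

Lemma count_diff :
  (\sum_(j < n1) (A1 j != A2 j) = nactive A1 + nactive A2 - 2 * ncommon A1 A2)%N.
Proof.
have E : (\sum_(j < n1) (A1 j != A2 j) + 2 * ncommon A1 A2 = nactive A1 + nactive A2)%N.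
  rewrite /ncommon /nactive big_distrr -!big_split /=; apply: eq_bigr => j _.
  by case: (A1 j); case: (A2 j).
by rewrite -E addnK.
Qed.

Lemma rank_diff (W1 : 'M[Rdefinitions.R]_(n1, n0)) (W2 : 'M[Rdefinitions.R]_(n2, n1)) :
  (\rank (MA A1 W1 W2 - MA A2 W1 W2)%R <= nactive A1 + nactive A2 - 2 * ncommon A1 A2)%N.
Proof.
rewrite /MA -map_mxB mxrank_map -mulmxBl -mulmxBr.
apply: leq_trans (mxrankM_maxl _ _) _.
apply: leq_trans (mxrankM_maxr _ _) _.
have -> : diagA A1 - diagA A2 = diag_mx (\row_j ((A1 j)%:R - (A2 j)%:R)).
  apply/matrixP => i j; rewrite !mxE; case: eqP => _; rewrite ?subr0 //.
apply: leq_trans (rank_diag _ _ _) _; rewrite -count_diff.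
apply: leq_sum => j _; rewrite mxE.
by case: (A1 j); case: (A2 j); rewrite /= ?subrr ?eqxx ?subr0 ?sub0r ?oppr_eq0 ?oner_eq0.
Qed.

End Main.

Theorem theorem6p2 (n0 n1 n2 : nat) (A1 A2 : 'I_n1 -> bool) :
  let r1 := nactive A1 in
  let r2 := nactive A2 in
  let s := ncommon A1 A2 in
  let t := (r1 + r2 - 2 * s)%N in
  let M1 := Mvar1 n2 n0 in
  let M2 := Mvar2 n2 n0 in
  let J := @JA n0 n1 n2 A1 A2 in
  (forall d, is_minor r1.+1 M1 d -> J d) /\
  (forall d, is_minor r2.+1 M2 d -> J d) /\
  (forall d, is_minor n1.+1 (row_mx M1 M2) d -> J d) /\
  (forall d, is_minor n1.+1 (row_mx M1^T M2^T) d -> J d) /\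
  (forall d, is_minor t.+1 (M1 - M2) d -> J d).
Proof.
move=> r1 r2 s t M1 M2 J.
split; [|split; [|split; [|split]]] => d [f [g [_ [_ ->]]]];
  apply: J_of => W1 W2; rewrite eval_det; apply: minor_rank.
- by rewrite /M1 map_M1 ltnS rank_MA.
- by rewrite /M2 map_M2 ltnS rank_MA.
- by rewrite map_row_mx /M1 /M2 map_M1 map_M2 ltnS rank_row.
- by rewrite map_row_mx -!map_trmx /M1 /M2 map_M1 map_M2 ltnS rank_rowT.
- by rewrite map_mxB /M1 /M2 map_M1 map_M2 ltnS rank_diff.
Qed.
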